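(* Let $q=p^f$ be a prime power, $N>1$ an integer with $N\mid(q-1)$, $\gamma$ a primitive element of $\mathbb{F}_q$, and $C_0=\langle\gamma^N\rangle$. Assume the Gauss periods $\eta_a=\sum_{x\in\gamma^aC_0}\psi(x)$, $0\le a\le N-1$, take exactly $\ell$ distinct values $\alpha_1,\dots,\alpha_\ell$, and let $I_i=\{a\in\mathbb{Z}_N:\eta_a=\alpha_i\}$ for $1\le i\le\ell$. Then each $I_i$ is invariant under multiplication by $p$ in $\mathbb{Z}_N$. Moreover, if $m:=\gcd\{\mathrm{ord}_n(p): n>1,\ n\mid N\}\ge 2$, then there is a unique $i_0\in\{1,\dots,\ell\}$ such that $|I_{i_0}|\equiv1\pmod m$ and $|I_i|\equiv 0\pmod m$ for all $i\ne i_0$.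
   Context: $\psi$ is the canonical additive character of $\mathbb{F}_q$: $\psi(x)=\xi_p^{\mathrm{Tr}_{q/p}(x)}$. $\mathrm{ord}_n(p)$ is the multiplicative order of $p$ modulo $n$. *)

(* Defs.v *)
From mathcomp Require Import all_boot all_order all_algebra all_field.
Set Implicit Arguments. Unset Strict Implicit. Unset Printing Implicit Defensive.
Import GRing.Theory Num.Theory.
Local Open Scope ring_scope.

Definition trace (F : finFieldType) (p f : nat) (x : F) : F :=
  \sum_(i < f) x ^+ (p ^ i).

(* The element of {0,...,p-1} whose image in F equals Tr(x)
   (Tr(x) lies in the prime field F_p). *)
Definition tr_nat (F : finFieldType) (p f : nat) (x : F) : nat :=
  if [pick k : 'I_p | (k%:R : F) == trace p f x] is Some k then val k else 0%N.

(* Canonical additive character psi(x) = xi_p ^ Tr(x), xi_p a primitive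
   p-th root of unity in the (algebraic) complex numbers. *)
Definition psi (F : finFieldType) (p f : nat) (xi : algC) (x : F) : algC :=
  xi ^+ tr_nat p f x.

Definition C0 (F : finFieldType) (N : nat) (g : F) : {set F} :=
  [set (g ^+ N) ^+ j | j : 'I_#|F|].

Definition cclass (F : finFieldType) (N : nat) (g : F) (a : nat) : {set F} :=
  [set g ^+ a * x | x in C0 N g].

Definition gauss_period (F : finFieldType) (p f : nat) (xi : algC)
    (N : nat) (g : F) (a : nat) : algC :=
  \sum_(x in cclass N g a) psi p f xi x.

(* ord_n(p): least k >= 1 with p^k = 1 (mod n) (searched among 1..n, which
   suffices when p is coprime to n). *)
Definition ord_mod (n p : nat) : nat :=
  (find (fun k => p ^ k.+1 == 1 %[mod n]) (iota 0 n)).+1.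

Definition m_gcd (N p : nat) : nat :=
  \big[gcdn/0%N]_(n < N.+1 | (1 < n)%N && (n %| N)%N) ord_mod n p.

(* Main.v *)
Require Import Defs.
From mathcomp Require Import all_boot all_order all_algebra all_field.
From mathcomp Require Import zify.
Import GRing.Theory Num.Theory.
Set Implicit Arguments. Unset Strict Implicit.

Lemma count_orbits (T : finType) (f : T -> T) (m : nat) (S : {set T}) :
  injective f -> (forall x, (f x \in S) = (x \in S)) ->
  (forall x, x \in S -> m %| order f x) -> m %| #|S|.
Proof.
move=> injf; have [n] := ubnP #|S|; elim: n S => // n IH S ltSn clS dvS.
case: (set_0Vmem S) => [->|[x xS]]; first by rewrite cards0 dvdn0.
set O := [set y | fconnect f x y].
have clO : forall y, (f y \in O) = (y \in O).
  by move=> y; rewrite !inE -same_fconnect1_r.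
have clS' : fclosed f S by move=> u v /eqP <-; rewrite clS.
have OS : O \subset S.
  apply/subsetP => y; rewrite inE => xy.
  by rewrite -(closed_connect clS' xy).
have cO : #|O| = order f x by apply: eq_card => y; rewrite inE.
have xO : x \in O by rewrite inE connect0.
have eS := cardsID O S; rewrite (setIidPr OS) in eS.
rewrite -eS dvdn_add //; first by rewrite cO dvS.
apply: IH.
- rewrite -ltnS (leq_trans _ ltSn) // -eS ltnS -add1n leq_add2r.
  by rewrite card_gt0; apply/set0Pn; exists x.
- by move=> y; rewrite !in_setD clO clS.
- by move=> y; rewrite in_setD => /andP[_]; apply: dvS.
Qed.

Definition sigm (N p : nat) (hN : 0 < N) (a : 'I_N) : 'I_N :=
  Ordinal (ltn_pmod (p * a) hN).

Lemma iter_sigm N p (hN : 0 < N) k a :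
  val (iter k (sigm p hN) a) = (p ^ k * a) %% N.
Proof.
elim: k => [|k IH] /=; first by rewrite mul1n modn_small.
by rewrite IH modnMmr mulnA -expnS.
Qed.

Lemma sigm_inj N p (hN : 0 < N) : coprime p N -> injective (sigm p hN).
Proof.
move=> cop.
have key : forall a b : 'I_N, a <= b -> (p * a) %% N = (p * b) %% N -> a = b.
  move=> a b le_ab E; apply/val_inj/eqP; rewrite eqn_leq le_ab /=.
  have : N %| p * b - p * a.
    by rewrite -eqn_mod_dvd ?leq_mul2l ?le_ab ?orbT // E.
  rewrite -mulnBr Gauss_dvdr; last by rewrite coprime_sym.
  have := ltn_ord b; have := ltn_ord a.
  case: (posnP (b - a)) => [/eqP|]; first by rewrite subn_eq0.
  move=> pos _ lb /(dvdn_leq pos); lia.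
move=> a b /(congr1 val) /= E.
case: (leqP a b) => [le|/ltnW le]; first by apply: key.
by apply/esym/key.
Qed.

Lemma ord_mod_dvd n p s : 1 < n -> coprime p n -> p ^ s = 1 %[mod n] ->
  ord_mod n p %| s.
Proof.
move=> n1 cop E1.
have hn0 : 0 < n by lia.
set one := Ordinal n1.
set o := order (sigm p hn0) one.
have Ho : p ^ o %% n = 1.
  have := iter_order (@sigm_inj n p hn0 cop) one.
  by move/(congr1 val); rewrite iter_sigm /= muln1.
have o_le : o <= n by rewrite /o /order; apply: leq_trans (max_card _) _; rewrite card_ord.
have o_gt0 : 0 < o := order_gt0 _ _.
set a := (fun k => p ^ k.+1 == 1 %[mod n]).
have hasa : has a (iota 0 n).
  apply/hasP; exists o.-1; first by rewrite mem_iota; lia.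
  by rewrite /a prednK // Ho modn_small.
set k0 := find a (iota 0 n).
have k0n : k0 < n by rewrite -(size_iota 0 n) -has_find.
have hk : p ^ k0.+1 = 1 %[mod n].
  by apply/eqP; have := nth_find 0 hasa; rewrite nth_iota.
have mink : forall j, j < k0 -> p ^ j.+1 != 1 %[mod n].
  move=> j jk; have := before_find 0 jk; rewrite nth_iota ?add0n; last lia.
  by rewrite /a => ->.
rewrite /ord_mod -/a -/k0.
set K := k0.+1.
have H : p ^ s = (p ^ K) ^ (s %/ K) * p ^ (s %% K).
  by rewrite -expnM -expnD (mulnC K) -divn_eq.
have Hr : p ^ (s %% K) = 1 %[mod n].
  have H1 : (p ^ K) ^ (s %/ K) = 1 %[mod n].
    by rewrite -modnXm hk modnXm exp1n.
  by rewrite -E1 H -modnMml H1 modnMml mul1n.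
rewrite /dvdn; apply/eqP.
case: (posnP (s %% K)) => // rpos.
have rK : s %% K < K by rewrite ltn_mod.
have lt : (s %% K).-1 < k0 by rewrite prednK // -ltnS.
by have := mink _ lt; rewrite prednK // Hr eqxx.
Qed.

Lemma orbit_dvd N p (hN : 0 < N) (x : 'I_N) : coprime p N -> 1 < N ->
  val x != 0 -> m_gcd N p %| order (sigm p hN) x.
Proof.
move=> cop N1 x0.
set o := order (sigm p hN) x.
have Ho : (p ^ o * x) %% N = x.
  have := iter_order (@sigm_inj N p hN cop) x.
  by move/(congr1 val); rewrite iter_sigm.
have xpos : 0 < x by rewrite lt0n.
have p0 : 0 < p ^ o.
  rewrite expn_gt0; apply/orP; left; rewrite lt0n; apply/eqP => p0.
  by move: cop; rewrite p0 /coprime gcd0n => /eqP; lia.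
have dvN : N %| (p ^ o - 1) * x.
  rewrite mulnBl mul1n -eqn_mod_dvd ?leq_pmull // Ho modn_small //.
set d := gcdn x N.
have d0 : 0 < d by rewrite gcdn_gt0 xpos.
set n := N %/ d.
have dN : d %| N by apply: dvdn_gcdr.
have dx : d %| x by apply: dvdn_gcdl.
have Nn : N = n * d by rewrite divnK.
have xx : (x : nat) = x %/ d * d by rewrite divnK.
have dlex : d <= x by apply: dvdn_leq.
have n1 : 1 < n.
  have : (x : nat) < n * d by rewrite -Nn ltn_ord.
  case: (n) => [|[|]] //; lia.
have cnx : coprime n (x %/ d).
  rewrite /coprime; apply/eqP.
  have : gcdn n (x %/ d) * d = d by rewrite muln_gcdl -Nn -xx gcdnC.
  by move/eqP; rewrite -[X in _ == X](mul1n d) eqn_pmul2r // => /eqP.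
have np : n %| p ^ o - 1.
  rewrite -(Gauss_dvdl _ cnx) -(dvdn_pmul2r d0) -mulnA -xx -Nn //.
have Hn : p ^ o = 1 %[mod n].
  by apply/eqP; rewrite eqn_mod_dvd.
have copn : coprime p n by apply: coprime_dvdr cop; apply: dvdn_div.
apply: dvdn_trans (ord_mod_dvd n1 copn Hn).
have nlt : n < N.+1 by rewrite ltnS; apply: dvdn_leq; [lia|apply: dvdn_div].
apply: (biggcdn_inf (Ordinal nlt)) => //=.
by rewrite n1 dvdn_div.
Qed.
Local Open Scope ring_scope.

Lemma trace_frob (F : finFieldType) p f (x : F) : #|F| = (p ^ f)%N ->
  trace p f (x ^+ p) = trace p f x.
Proof.
move=> hF; rewrite /trace.
have E : \sum_(i < f.+1) x ^+ (p ^ i) = x + \sum_(i < f) (x ^+ p) ^+ (p ^ i).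
  rewrite big_ord_recl expn0 expr1; congr (_ + _).
  by apply: eq_bigr => i _; rewrite -exprM -expnS.
have E2 : \sum_(i < f.+1) x ^+ (p ^ i) = \sum_(i < f) x ^+ (p ^ i) + x.
  by rewrite big_ord_recr /= -hF expf_card.
by apply: (@addrI _ x); rewrite -E E2 addrC.
Qed.

Lemma psi_frob (F : finFieldType) p f xi (x : F) : #|F| = (p ^ f)%N ->
  psi p f xi (x ^+ p) = psi p f xi x.
Proof. by move=> hF; rewrite /psi /tr_nat trace_frob. Qed.

Lemma mem_cclass (F : finFieldType) (N : nat) (g : F) (a : nat) (y : F) :
  (0 < N)%N -> (N %| #|F|.-1)%N -> (#|F|.-1).-primitive_root g ->
  (y \in cclass N g a) <-> exists e : nat, y = g ^+ e /\ (e = a %[mod N])%N.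
Proof.
move=> N0 dN prg.
have F1 : (1 < #|F|)%N := card_finNzRing_gt1 F.
set q1 := #|F|.-1.
have gq : g ^+ q1 = 1 := prim_expr_order prg.
split.
  case/imsetP => x /imsetP [j _ ->] ->.
  exists (a + N * j)%N; split; first by rewrite exprD exprM.
  by rewrite addnC mulnC modnMDl.
case=> e [-> He].
have [k Hk] := dvdnP dN.
set e' := (e + q1 * a)%N.
have ge' : g ^+ e' = g ^+ e by rewrite exprD exprM gq expr1n mulr1.
have ae' : (a <= e')%N.
  rewrite /e'; have : (0 < q1)%N by rewrite /q1; lia.
  by case: (q1) => // n _; rewrite mulSn; lia.
have He' : (e' = a %[mod N])%N by rewrite /e' /q1 Hk mulnAC addnC modnMDl He.
have dv : (N %| e' - a)%N by rewrite -eqn_mod_dvd // He'.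
set j0 := ((e' - a) %/ N)%N.
have ej : e' = (a + N * j0)%N by rewrite /j0 mulnC divnK // subnKC.
have gN : (g ^+ N) ^+ q1 = 1 by rewrite exprAC gq expr1n.
have lt : (j0 %% q1 < #|F|)%N.
  by apply: (leq_trans (ltn_pmod _ _)); rewrite /q1; lia.
apply/imsetP; exists ((g ^+ N) ^+ (j0 %% q1)).
  by apply/imsetP; exists (Ordinal lt).
by rewrite expr_mod // -ge' ej exprD exprM.
Qed.

Lemma cclass_mod (F : finFieldType) (N : nat) (g : F) (a b : nat) :
  (0 < N)%N -> (N %| #|F|.-1)%N -> (#|F|.-1).-primitive_root g ->
  (a = b %[mod N])%N -> cclass N g a = cclass N g b.
Proof.
move=> N0 dN prg ab; apply/setP => y; apply/idP/idP.
  move/(mem_cclass _ _ N0 dN prg) => [e [-> He]]; apply/(mem_cclass _ _ N0 dN prg).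
  by exists e; rewrite He ab.
move/(mem_cclass _ _ N0 dN prg) => [e [-> He]]; apply/(mem_cclass _ _ N0 dN prg).
by exists e; rewrite He ab.
Qed.

Lemma gauss_frob (F : finFieldType) p f xi (N : nat) (g : F) (a : nat) :
  #|F| = (p ^ f)%N ->
  (0 < N)%N -> (N %| #|F|.-1)%N -> (#|F|.-1).-primitive_root g ->
  gauss_period p f xi N g (p * a) = gauss_period p f xi N g a.
Proof.
move=> hF N0 dN prg.
have F1 : (1 < #|F|)%N := card_finNzRing_gt1 F.
case: f hF => [|f] hF; first by rewrite hF expn0 in F1.
have inv : forall x : F, (x ^+ p) ^+ (p ^ f) = x.
  by move=> x; rewrite -exprM -expnS -hF expf_card.
have qN : (p ^ f.+1 = 1 %[mod N])%N.
  have [k Hk] := dvdnP dN.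
  by rewrite -hF -(prednK (ltnW F1)) Hk -addn1 modnMDl.
have E : cclass N g (p * a) = [set x ^+ p | x in cclass N g a].
  apply/setP => y; apply/idP/idP.
    move/(mem_cclass _ _ N0 dN prg) => [e [-> He]].
    apply/imsetP; exists ((g ^+ e) ^+ (p ^ f)); last first.
      by rewrite -!exprM -mulnA -expnSr -hF exprM expf_card.
    apply/(mem_cclass _ _ N0 dN prg); exists (e * p ^ f)%N; split.
      by rewrite exprM.
    by rewrite -modnMml He modnMml mulnAC -expnS -modnMml qN modnMml mul1n.
  case/imsetP => x /(mem_cclass _ _ N0 dN prg) [e [-> He]] ->.
  apply/(mem_cclass _ _ N0 dN prg); exists (e * p)%N; split; first by rewrite exprM.
  by rewrite -modnMml He modnMml mulnC.
rewrite /gauss_period E big_imset /=.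
  by apply: eq_bigr => x _; rewrite psi_frob.
by move=> x y _ _ exy; rewrite -(inv x) exy inv.
Qed.

Unset Implicit Arguments.

Theorem lemma3p3 (F : finFieldType) (p f N : nat) (xi : algC) (g : F)
    (l : nat) (alpha : 'I_l -> algC) :
  prime p -> p \in [pchar F] -> #|F| = (p ^ f)%N ->
  (1 < N)%N -> (N %| #|F|.-1)%N ->
  p.-primitive_root xi ->
  (#|F|.-1).-primitive_root g ->
  injective alpha ->
  (forall a : 'I_N, exists i : 'I_l, gauss_period p f xi N g a = alpha i) ->
  (forall i : 'I_l, exists a : 'I_N, gauss_period p f xi N g a = alpha i) ->
  let I := fun i : 'I_l => [set a : 'I_N | gauss_period p f xi N g a == alpha i] in
  (forall (i : 'I_l) (a b : 'I_N), (val b = (p * a) %% N)%N ->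
      a \in I i -> b \in I i) /\
  ((2 <= m_gcd N p)%N ->
     exists! i0 : 'I_l,
       (#|I i0| = 1 %[mod m_gcd N p])%N /\
       (forall i : 'I_l, i != i0 -> (#|I i| = 0 %[mod m_gcd N p])%N)).
Proof.
move=> pr_p _ hF N1 dN _ prg inj_alpha cover _ I.
have N0 : (0 < N)%N by lia.
have F1 : (1 < #|F|)%N := card_finNzRing_gt1 F.
have f0 : (0 < f)%N by rewrite lt0n; apply/eqP => f0; rewrite hF f0 expn0 in F1.
have cop : coprime p N.
  rewrite coprime_sym. apply: (coprime_dvdl dN).
  rewrite -(coprime_pexpr _ _ f0) -hF.
  by rewrite -{2}(prednK (ltnW F1)) coprimenS.
have P1 : forall (i : 'I_l) (a b : 'I_N), (val b = (p * a) %% N)%N ->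
      a \in I i -> b \in I i.
  move=> i a b hb; rewrite !inE => /eqP ha; apply/eqP; rewrite -ha.
  rewrite -(gauss_frob xi a hF N0 dN prg) /gauss_period.
  rewrite (cclass_mod (b := (p * a)%N) N0 dN prg) // hb modn_mod //.
split => //.
move=> m2; set m := m_gcd N p.
set sigma := sigm p N0.
have injs : injective sigma := @sigm_inj N p N0 cop.
have Isig : forall i (x : 'I_N), (sigma x \in I i) = (x \in I i).
  move=> i x; apply/idP/idP; last by apply: P1.
  have [j Hj] := cover x.
  have xj : x \in I j by rewrite inE Hj.
  move=> sx; have := P1 j x (sigma x) erefl xj.
  move: sx; rewrite !inE => /eqP -> /eqP aij.
  by rewrite Hj (inj_alpha _ _ aij).
set zero : 'I_N := Ordinal N0.
have sz : sigma zero = zero by apply/val_inj; rewrite /= muln0 mod0n.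
have [i0 H0] := cover zero.
have zI : forall i, (zero \in I i) = (i == i0).
  by move=> i; rewrite inE H0 (inj_eq inj_alpha) eq_sym.
have Sdiv : forall i, (m %| #|I i :\ zero|)%N.
  move=> i; apply: (count_orbits injs).
    by move=> x; rewrite !in_setD1 Isig -{1}sz (inj_eq injs).
  move=> x; rewrite in_setD1 => /andP[nz _]; apply: orbit_dvd => //.
have cardI : forall i, #|I i| = ((i == i0) + #|I i :\ zero|)%N.
  by move=> i; rewrite (cardsD1 zero) zI.
have Hother : forall i : 'I_l, i != i0 -> (#|I i| = 0 %[mod m])%N.
  move=> i ni; rewrite cardI (negbTE ni) add0n mod0n.
  exact: (eqP (Sdiv i)).
exists i0; split.
  split => //; rewrite cardI eqxx.
  by have [k ->] := dvdnP (Sdiv i0); rewrite addnC modnMDl.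
move=> j [Hj _]; apply/eqP; apply: contraT => nj.
have := Hother j; rewrite eq_sym in nj; move/(_ nj).
rewrite Hj mod0n modn_small //.
Qed.
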